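(* Let $f:\mathbb{R}^d\to\mathbb{R}$, let $p_u:\mathbb{R}^d\to[0,\infty)$, and let $q_+,q_-$ be probability density functions on $\mathbb{R}^d$. Let $n_+,n_-\ge1$ be integers and let $\boldsymbol{x}_{1+},\dots,\boldsymbol{x}_{n_++}$ and $\boldsymbol{x}_{1-},\dots,\boldsymbol{x}_{n_--}$ be points with $q_+(\boldsymbol{x}_{i+})>0$ and $q_-(\boldsymbol{x}_{i-})>0$ (e.g. samples drawn from $q_+$ and $q_-$ respectively). Write $S_+=\{\boldsymbol{x}_{i+}: 1\le i\le n_+\}$, $S_-=\{\boldsymbol{x}_{i-}:1\le i\le n_-\}$, and define for $\mu\in\mathbb{R}$ $$\Psi_{n_+,n_-}(\mu)=\frac1{n_+}\sum_{i=1}^{n_+}\frac{(f(\boldsymbol{x}_{i+})-\mu)_+p_u(\boldsymbol{x}_{i+})}{q_+(\boldsymbol{x}_{i+})}-\frac1{n_-}\sum_{i=1}^{n_-}\frac{(f(\boldsymbol{x}_{i-})-\mu)_-p_u(\boldsymbol{x}_{i-})}{q_-(\boldsymbol{x}_{i-})}.$$ Assume that $\max_{\boldsymbol{x}\in S_+}p_u(\boldsymbol{x})>0$ and $\max_{\boldsymbol{x}\in S_-}p_u(\boldsymbol{x})>0$. Then there exists $\hat\mu\in\mathbb{R}$ with $\Psi_{n_+,n_-}(\hat\mu)=0$. Moreover, let $\overline{f}=\max\{f(\boldsymbol{x}): \boldsymbol{x}\in S_+,\ p_u(\boldsymbol{x})>0\}$ and $\underline{f}=\min\{f(\boldsymbol{x}):\boldsymbol{x}\in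 S_-,\ p_u(\boldsymbol{x})>0\}$. If $\overline{f}>\underline{f}$, then there is at most one solution $\mu$ of $\Psi_{n_+,n_-}(\mu)=0$.
   Context: For $a\in\mathbb{R}$, $(a)_+=\max(a,0)$ and $(a)_-=\max(-a,0)$, so $a=(a)_+-(a)_-$. Here $p_u$ plays the role of an unnormalized probability density. *)

(* Defs.v *)
From HB Require Import structures.
From mathcomp Require Import all_boot all_order all_algebra.
From mathcomp Require Import all_classical all_reals all_analysis.
Set Implicit Arguments. Unset Strict Implicit. Unset Printing Implicit Defensive.
Import Order.TTheory GRing.Theory Num.Theory.
Local Open Scope ring_scope.

(* Points of R^d are represented as d.-tuples of reals; d.-tuple R carries the
   product sigma-algebra from MathComp-Analysis (measurable_structure.v). *)

(* Lebesgue integral over R^d of a nonnegative function, written as the iterated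
   integral over the coordinates (equal to the integral w.r.t. the d-dimensional
   Lebesgue measure for nonnegative measurable functions, by Tonelli). *)
Fixpoint lebesgue_int_Rd (R : realType) (d : nat) :
    (d.-tuple R -> \bar R) -> \bar R :=
  match d with
  | 0 => fun g => g [tuple]
  | d'.+1 => fun g =>
      (\int[@lebesgue_measure R]_(x in [set: R])
         lebesgue_int_Rd (fun t : d'.-tuple R => g [tuple of x :: t]))%E
  end.

Definition is_pdf (R : realType) (d : nat) (q : d.-tuple R -> R) : Prop :=
  [/\ forall x, 0 <= q x,
      measurable_fun [set: d.-tuple R] q &
      lebesgue_int_Rd (fun x => (q x)%:E) = 1%E ].

Definition pos_part (R : realType) (a : R) : R := Num.max a 0.
Definition neg_part (R : realType) (a : R) : R := Num.max (- a) 0.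

Definition Psi (R : realType) (d np nm : nat)
    (f pu qp qm : d.-tuple R -> R)
    (xp : 'I_np -> d.-tuple R) (xm : 'I_nm -> d.-tuple R) (mu : R) : R :=
  (np%:R)^-1 * \sum_(i < np) pos_part (f (xp i) - mu) * pu (xp i) / qp (xp i)
  - (nm%:R)^-1 * \sum_(i < nm) neg_part (f (xm i) - mu) * pu (xm i) / qm (xm i).

(* Main.v *)
Require Import Defs.
From HB Require Import structures.
From mathcomp Require Import all_boot all_order all_algebra.
From mathcomp Require Import all_classical all_reals all_analysis.
From mathcomp Require Import lra.
Import Order.TTheory GRing.Theory Num.Theory.
Import numFieldNormedType.Exports.
Set Implicit Arguments. Unset Strict Implicit.
Local Open Scope ring_scope.
Section S.
Variable R : realType.

Lemma cont_sum n (g : 'I_n -> R -> R) :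
  (forall i, continuous (fun x : R => g i x)) -> continuous (fun x : R => \sum_(i<n) g i x).
Proof.
elim: n g => [|n IH] g H.
  under eq_fun do rewrite big_ord0. exact: cst_continuous.
under eq_fun do rewrite big_ord_recr /=.
move=> x; apply: (@continuousD _ _ _ (fun x => \sum_(i < n) g (widen_ord (leqnSn n) i) x) (g ord_max)).
  exact: (IH (fun i => g (widen_ord (leqnSn n) i))).
exact: H.
Qed.

Lemma cont_max (a c : R) : continuous (fun mu : R => Num.max (a - mu) 0 * c).
Proof.
move=> x.
apply: (@continuousM _ _ (fun mu => Num.max (a - mu) 0) (fun=> c)); last exact: cst_continuous.
apply: (@continuous_max _ _ (fun mu : R => a - mu) (fun=> 0)); last exact: cst_continuous.
apply: (@continuousB _ _ _ (fun=> a) id); [exact: cst_continuous|by move=> ?; apply: cvg_id].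
Qed.
Lemma cont_neg (a c : R) : continuous (fun mu : R => Num.max (- (a - mu)) 0 * c).
Proof.
move=> x.
apply: (@continuousM _ _ (fun mu => Num.max (- (a - mu)) 0) (fun=> c)); last exact: cst_continuous.
apply: (@continuous_max _ _ (fun mu : R => - (a - mu)) (fun=> 0)); last exact: cst_continuous.
apply: (@continuousN _ _ _ (fun mu : R => a - mu)).
apply: (@continuousB _ _ _ (fun=> a) id); [exact: cst_continuous|by move=> ?; apply: cvg_id].
Qed.

Lemma term_le (n : nat) (F : 'I_n -> R) j : (forall i, 0 <= F i) -> F j <= \sum_(i < n) F i.
Proof.
move=> H; rewrite (bigD1 j) //= lerDl; apply: sumr_ge0 => i _; exact: H.
Qed.

Variables (n : nat) (c w : 'I_n -> R).
Hypothesis w0 : forall i, 0 <= w i.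

Definition SP mu := \sum_(i < n) Num.max (c i - mu) 0 * w i.
Definition SN mu := \sum_(i < n) Num.max (- (c i - mu)) 0 * w i.

Lemma maxge0 (x : R) : 0 <= Num.max x 0.
Proof. by rewrite le_max lexx orbT. Qed.

Lemma SP_ge0 mu : 0 <= SP mu.
Proof. apply: sumr_ge0 => i _; apply: mulr_ge0; [exact: maxge0|exact: w0]. Qed.
Lemma SN_ge0 mu : 0 <= SN mu.
Proof. apply: sumr_ge0 => i _; apply: mulr_ge0; [exact: maxge0|exact: w0]. Qed.

Lemma SP_noninc m1 m2 : m1 <= m2 -> SP m2 <= SP m1.
Proof.
move=> H; apply: ler_sum => i _; apply: ler_wpM2r; first exact: w0.
rewrite ge_max le_max le_max lexx !orbT andbT; apply/orP; left; lra.
Qed.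

Lemma SN_nondec m1 m2 : m1 <= m2 -> SN m1 <= SN m2.
Proof.
move=> H; apply: ler_sum => i _; apply: ler_wpM2r; first exact: w0.
rewrite ge_max le_max le_max lexx !orbT andbT; apply/orP; left; lra.
Qed.

Lemma SP_le0 mu : (forall i, c i <= mu) -> SP mu <= 0.
Proof.
move=> H; apply: sumr_le0 => i _; apply: mulr_le0_ge0; last exact: w0.
rewrite ge_max lexx andbT; have := H i; lra.
Qed.

Lemma SN_le0 mu : (forall i, mu <= c i) -> SN mu <= 0.
Proof.
move=> H; apply: sumr_le0 => i _; apply: mulr_le0_ge0; last exact: w0.
rewrite ge_max lexx andbT; have := H i; lra.
Qed.

Lemma SP_pos mu i : 0 < w i -> mu < c i -> 0 < SP mu.
Proof.
move=> Hw Hc; apply: (lt_le_trans _ (@term_le n (fun k => Num.max (c k - mu) 0 * w k) i _)).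
  apply: mulr_gt0 => //; rewrite lt_max; apply/orP; left; lra.
move=> k; apply: mulr_ge0; [exact: maxge0|exact: w0].
Qed.

Lemma SN_pos mu i : 0 < w i -> c i < mu -> 0 < SN mu.
Proof.
move=> Hw Hc; apply: (lt_le_trans _ (@term_le n (fun k => Num.max (- (c k - mu)) 0 * w k) i _)).
  apply: mulr_gt0 => //; rewrite lt_max; apply/orP; left; lra.
move=> k; apply: mulr_ge0; [exact: maxge0|exact: w0].
Qed.

Lemma SN_strict m1 m2 : m1 < m2 -> 0 < SN m2 -> SN m1 < SN m2.
Proof.
move=> H12 Hpos.
have [j Hj] : exists j, 0 < Num.max (- (c j - m2)) 0 * w j.
  case: (boolP [exists j, 0 < Num.max (- (c j - m2)) 0 * w j]) => [/existsP//|/existsPn Hn].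
  exfalso; have : SN m2 <= 0.
    by apply: sumr_le0 => i _; have := Hn i; rewrite -leNgt.
  by rewrite leNgt Hpos.
have wj : 0 < w j.
  rewrite lt_neqAle w0 andbT eq_sym; apply/negP => /eqP E.
  by move: Hj; rewrite E mulr0 ltxx.
have nj : 0 < Num.max (- (c j - m2)) 0.
  by move: Hj; rewrite pmulr_lgt0.
have cj : 0 < - (c j - m2) by move: nj; rewrite lt_max ltxx orbF.
rewrite /SN (bigD1 j) //= [X in _ < X](bigD1 j) //=.
apply: ltr_leD.
  rewrite ltr_pM2r // gt_max; apply/andP; split; last by [].
  rewrite lt_max; apply/orP; left; lra.
apply: ler_sum => i _; apply: ler_wpM2r; first exact: w0.
rewrite ge_max le_max le_max lexx !orbT andbT; apply/orP; left; lra.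
Qed.

Lemma SP_cont : continuous SP.
Proof. apply: (@cont_sum n (fun i mu => Num.max (c i - mu) 0 * w i)) => i; exact: cont_max. Qed.
Lemma SN_cont : continuous SN.
Proof. apply: (@cont_sum n (fun i mu => Num.max (- (c i - mu)) 0 * w i)) => i; exact: cont_neg. Qed.

End S.

Lemma PsiE (R : realType) (d : nat) (f pu qp qm : d.-tuple R -> R)
    (np nm : nat) (xp : 'I_np -> d.-tuple R) (xm : 'I_nm -> d.-tuple R) mu :
  Psi f pu qp qm xp xm mu =
  np%:R^-1 * SP (fun i => f (xp i)) (fun i => pu (xp i) / qp (xp i)) mu
  - nm%:R^-1 * SN (fun i => f (xm i)) (fun i => pu (xm i) / qm (xm i)) mu.
Proof.
rewrite /Psi /SP /SN; congr (_ * _ - _ * _); apply: eq_bigr => i _;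
  by rewrite /pos_part /neg_part mulrA.
Qed.

Theorem proposition1 (R : realType) (d : nat)
    (f pu qp qm : d.-tuple R -> R)
    (np nm : nat) (xp : 'I_np -> d.-tuple R) (xm : 'I_nm -> d.-tuple R) :
  (forall x, 0 <= pu x) ->
  is_pdf qp -> is_pdf qm ->
  (1 <= np)%N -> (1 <= nm)%N ->
  (forall i, 0 < qp (xp i)) -> (forall i, 0 < qm (xm i)) ->
  (* max over S_+ of p_u is > 0, likewise over S_- *)
  (exists i, 0 < pu (xp i)) -> (exists i, 0 < pu (xm i)) ->
  (exists muhat : R, Psi f pu qp qm xp xm muhat = 0) /\
  (forall fbar flow : R,
     (* fbar = max { f x | x in S_+, p_u x > 0 } *)
     (exists i, 0 < pu (xp i) /\ f (xp i) = fbar) ->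
     (forall i, 0 < pu (xp i) -> f (xp i) <= fbar) ->
     (* flow = min { f x | x in S_-, p_u x > 0 } *)
     (exists i, 0 < pu (xm i) /\ f (xm i) = flow) ->
     (forall i, 0 < pu (xm i) -> flow <= f (xm i)) ->
     flow < fbar ->
     forall mu1 mu2 : R,
       Psi f pu qp qm xp xm mu1 = 0 -> Psi f pu qp qm xp xm mu2 = 0 ->
       mu1 = mu2).
Proof.
move=> pu0 _ _ np1 nm1 qp0 qm0 _ _.
have PE := PsiE f pu qp qm xp xm.
set cp := (fun i => f (xp i)) in PE *.
set cm := (fun i => f (xm i)) in PE *.
set wp := (fun i => pu (xp i) / qp (xp i)) in PE *.
set wm := (fun i => pu (xm i) / qm (xm i)) in PE *.
have wp0 : forall i, 0 <= wp i by move=> i; rewrite /wp divr_ge0 // ltW.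
have wm0 : forall i, 0 <= wm i by move=> i; rewrite /wm divr_ge0 // ltW.
have np0 : 0 < np%:R^-1 :> R by rewrite invr_gt0 ltr0n.
have nm0 : 0 < nm%:R^-1 :> R by rewrite invr_gt0 ltr0n.
split.
  pose a : R := - \sum_(j < nm) `|cm j|.
  pose b : R := \sum_(i < np) `|cp i|.
  have Ha : forall j, a <= cm j.
    move=> j; have h1 := @term_le R nm (fun k => `|cm k|) j (fun k => normr_ge0 _).
    have := ler_norm (- cm j); rewrite normrN /a => ?; lra.
  have Hb : forall i, cp i <= b.
    move=> i; have h1 := @term_le R np (fun k => `|cp k|) i (fun k => normr_ge0 _).
    have := ler_norm (cp i); rewrite /b => ?; lra.
  have Hab : a <= b.
    have : 0 <= b by apply: sumr_ge0 => i _.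
    have : 0 <= \sum_(j < nm) `|cm j| by apply: sumr_ge0 => i _.
    rewrite /a; lra.
  have Hcont : continuous (Psi f pu qp qm xp xm).
    have -> : Psi f pu qp qm xp xm = fun mu => np%:R^-1 * SP cp wp mu - nm%:R^-1 * SN cm wm mu.
      by apply: funext => mu; rewrite PE.
    move=> x.
    apply: (@continuousB _ _ _ (fun mu => np%:R^-1 * SP cp wp mu) (fun mu => nm%:R^-1 * SN cm wm mu)).
      apply: (@continuousM _ _ (fun=> np%:R^-1) (SP cp wp)); [exact: cst_continuous|exact: SP_cont].
    apply: (@continuousM _ _ (fun=> nm%:R^-1) (SN cm wm)); [exact: cst_continuous|exact: SN_cont].
  have Pa : 0 <= Psi f pu qp qm xp xm a.
    rewrite PE; have := SN_le0 wm0 Ha; have := SP_ge0 cp wp0 a.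
    have := SN_ge0 cm wm0 a. nra.
  have Pb : Psi f pu qp qm xp xm b <= 0.
    rewrite PE; have := SP_le0 wp0 Hb; have := SN_ge0 cm wm0 b.
    have := SP_ge0 cp wp0 b. nra.
  have [mu _ Hmu] := @IVT R (Psi f pu qp qm xp xm) a b 0 Hab ltac:(by apply: continuous_subspaceT)
    ltac:(by rewrite ge_min le_max Pa Pb orbT).
  by exists mu.
move=> fbar flow [i0 [Hi0 Ei0]] _ [j0 [Hj0 Ej0]] _ Hlt.
have key : forall m1 m2, m1 < m2 -> Psi f pu qp qm xp xm m2 = 0 ->
    Psi f pu qp qm xp xm m2 < Psi f pu qp qm xp xm m1.
  move=> m1 m2 H12 Z.
  have Bpos : 0 < SN cm wm m2.
    case: (ltP flow m2) => Hf.
      apply: (SN_pos wm0 (i := j0)); first by rewrite /wm divr_gt0.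
      by rewrite /cm Ej0.
    have Ap : 0 < SP cp wp m2.
      apply: (SP_pos wp0 (i := i0)); first by rewrite /wp divr_gt0.
      rewrite /cp Ei0; lra.
    move: Z; rewrite PE => Z.
    have : 0 < np%:R^-1 * SP cp wp m2 by apply: mulr_gt0.
    have := SN_ge0 cm wm0 m2. nra.
  have S1 := SN_strict wm0 H12 Bpos.
  have S2 := SP_noninc cp wp0 (ltW H12).
  rewrite !PE; apply: ler_ltB.
    exact: (ler_wpM2l (ltW np0) S2).
  by rewrite ltr_pM2l.
move=> mu1 mu2 Z1 Z2.
case: (ltgtP mu1 mu2) => // H.
  by have := key _ _ H Z2; rewrite Z1 Z2 ltxx.
by have := key _ _ H Z1; rewrite Z1 Z2 ltxx.
Qed.
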